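(* Let $(X_1,\le_1)$, $(X_2,\le_2)$ be partially ordered sets and $T:X_1\to X_2$ a map. The following are equivalent: (a) $T$ has the Mcp; (b) $T$ is monotone and for every $A\subset X_1$ and $u\in X_2$ such that $T(a)\le_2 u$ for all $a\in A$, we have $T(a)\le_2u$ for all $a\in\widehat A$; (c) $T$ is monotone and $T(\overline A)\subset\overline{T(A)}$ for every $A\subset X_1$; (d) $T(\widehat A)\subset\widehat{T(A)}$ for every $A\subset X_1$; (e) for every $A\subset X_1$ having a tip, the set $T(A)$ has a tip and $T({\sf tip}\,A)={\sf tip}\,T(A)$.
   Context: Let $(X,\le)$ be a partially ordered set. A subset $D\subset X$ is directed if every finite subset of $D$ (including the empty one) has an upper bound in $D$; in particular directed sets are nonempty. $A\subset X$ is a lower set if $x\in A$ and $y\le x$ imply $y\in A$. A subset $A\subset X$ is directed-sup-closed if the supremum of every directed $D\subset A$ which has a supremum in $X$ belongs to $A$. For $A\subset X$, $\overline A$ is the smallest directed-sup-closed subset of $X$ containing $A$, and $\widehat A$ is the smallest subset of $X$ containing $A$ which is both a lower set and directed-sup-closed (closures in $X_1$ resp. $X_2$ as appropriate). $A$ has a tip if $\overline A$ has a maximum; this maximum is denoted ${\sf tip}\,A$. A map $T:X_1\to X_2$ between partially ordered sets has the Monotone Convergence Property (Mcp) if for every directed $D\subset X_1$ having a supremum, $T(D)$ has a supremum and $T(\sup D)=\sup T(D)$. *)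

(* Defs.v *)
From mathcomp Require Import all_boot all_order.
Set Implicit Arguments. Unset Strict Implicit. Unset Printing Implicit Defensive.
Import Order.TTheory.
Local Open Scope order_scope.

Section PosetDefs.
Context {d : Order.disp_t} {X : porderType d}.

(* every finite subset (given as a list, possibly empty) of D has an upper bound in D *)
Definition directed (D : X -> Prop) : Prop :=
  forall s : seq X, (forall x, x \in s -> D x) ->
    exists2 u, D u & forall x, x \in s -> x <= u.

Definition is_sup (D : X -> Prop) (s : X) : Prop :=
  (forall x, D x -> x <= s) /\ (forall u, (forall x, D x -> x <= u) -> s <= u).

Definition lower_set (A : X -> Prop) : Prop :=
  forall x y, A x -> y <= x -> A y.

Definition dsup_closed (A : X -> Prop) : Prop :=
  forall D : X -> Prop, (forall x, D x -> A x) -> directed D ->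
    forall s, is_sup D s -> A s.

(* \overline A : smallest directed-sup-closed set containing A *)
Definition dclos (A : X -> Prop) : X -> Prop :=
  fun x => forall B : X -> Prop, dsup_closed B -> (forall y, A y -> B y) -> B x.

(* \widehat A : smallest directed-sup-closed lower set containing A *)
Definition hclos (A : X -> Prop) : X -> Prop :=
  fun x => forall B : X -> Prop, lower_set B -> dsup_closed B ->
    (forall y, A y -> B y) -> B x.

(* t = tip A, i.e. t is the maximum of \overline A *)
Definition is_tip (A : X -> Prop) (t : X) : Prop :=
  dclos A t /\ forall x, dclos A x -> x <= t.

Definition has_tip (A : X -> Prop) : Prop := exists t, is_tip A t.

End PosetDefs.

Definition img {T U : Type} (f : T -> U) (A : T -> Prop) : U -> Prop :=
  fun y => exists2 x, A x & f x = y.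

Section MapDefs.
Context {d1 d2 : Order.disp_t} {X1 : porderType d1} {X2 : porderType d2}.

Definition monotone (T : X1 -> X2) : Prop := forall x y, x <= y -> T x <= T y.

Definition Mcp (T : X1 -> X2) : Prop :=
  forall D : X1 -> Prop, directed D -> forall s, is_sup D s ->
    exists2 s', is_sup (img T D) s' & T s = s'.

End MapDefs.

(* Main.v *)
Require Import Defs.
From mathcomp Require Import all_boot all_order.
Local Open Scope order_scope.
Import Order.TTheory.

Section Gen.
Context {d : Order.disp_t} {X : porderType d}.

Lemma dclos_incl (A : X -> Prop) y : A y -> dclos A y.
Proof. by move=> Ay B _ H; apply: H. Qed.

Lemma dclos_closed (A : X -> Prop) : dsup_closed (dclos A).
Proof.
move=> D DA Dd s Hs B HB AB; apply: (HB D) => // x Dx; exact: DA.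
Qed.

Lemma hclos_incl (A : X -> Prop) y : A y -> hclos A y.
Proof. by move=> Ay B _ _ H; apply: H. Qed.

Lemma hclos_closed (A : X -> Prop) : dsup_closed (hclos A).
Proof.
move=> D DA Dd s Hs B HL HB AB; apply: (HB D) => // x Dx; exact: DA.
Qed.

Lemma hclos_lower (A : X -> Prop) : lower_set (hclos A).
Proof. move=> x y Hx yx B HL HB AB; exact: (HL x y (Hx B HL HB AB) yx). Qed.

Lemma down_closed (u : X) : dsup_closed (fun x => x <= u).
Proof. move=> D DA _ s [_ H]; exact: H. Qed.

Lemma down_lower (u : X) : lower_set (fun x => x <= u).
Proof. move=> x y xu yx; exact: le_trans yx xu. Qed.

Lemma sup_dclos (D : X -> Prop) s : directed D -> is_sup D s -> dclos D s.
Proof. move=> Dd Hs; exact: (@dclos_closed D D (fun x => @dclos_incl D x) Dd s Hs). Qed.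

Lemma sup_hclos (D : X -> Prop) s : directed D -> is_sup D s -> hclos D s.
Proof. move=> Dd Hs; exact: (@hclos_closed D D (fun x => @hclos_incl D x) Dd s Hs). Qed.
End Gen.

Section Map.
Context {d1 d2 : Order.disp_t} {X1 : porderType d1} {X2 : porderType d2}.
Variable T : X1 -> X2.

Lemma img_directed (D : X1 -> Prop) : monotone T -> directed D -> directed (img T D).
Proof.
move=> mT Dd s; elim: s => [|y s IH] H.
  have [u Du _] : exists2 u, D u & forall x, x \in [::] -> x <= u.
    by apply: Dd => x; rewrite in_nil.
  by exists (T u); [exists u | ].
have [|u [x0 Dx0 <-] Hu] := IH.
  by move=> z hz; apply: H; rewrite in_cons hz orbT.
have [x Dx Txy] := H y (mem_head _ _).
have [v Dv Hv] : exists2 v, D v & forall z, z \in [:: x; x0] -> z <= v.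
  by apply: Dd => z; rewrite !inE => /orP[/eqP->|/eqP->].
exists (T v); first by exists v.
move=> z; rewrite in_cons => /orP[/eqP->|hz].
  by rewrite -Txy; apply: mT; apply: Hv; rewrite !inE eqxx.
apply: le_trans (Hu z hz) _; apply: mT; apply: Hv; by rewrite !inE eqxx orbT.
Qed.

Lemma mcp_mono : Mcp T -> monotone T.
Proof.
move=> H x y xy.
pose D := fun z => z = x \/ z = y.
have Dd : directed D.
  move=> s Hs; exists y; first by right.
  by move=> z /Hs [->|->].
have Hs : is_sup D y.
  split; first by move=> z [->|->].
  move=> u Hu; apply: Hu; by right.
have [s' [Hs' _] ->] := H D Dd y Hs.
apply: Hs'; exists x => //; by left.
Qed.

Definition PB := monotone T /\
  (forall (A : X1 -> Prop) (u : X2), (forall a, A a -> T a <= u) ->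
     forall a, hclos A a -> T a <= u).
Definition PC := monotone T /\
  (forall A : X1 -> Prop, forall y, img T (dclos A) y -> dclos (img T A) y).
Definition PD := (forall A : X1 -> Prop, forall y, img T (hclos A) y -> hclos (img T A) y).
Definition PE := (forall A : X1 -> Prop, has_tip A ->
   has_tip (img T A) /\
   forall t, is_tip A t -> exists2 t', is_tip (img T A) t' & T t = t').

Lemma a_b : Mcp T -> PB.
Proof.
move=> H; have mT := mcp_mono H; split => // A u Au a Ha.
apply: (Ha (fun x => T x <= u)) => //.
- by move=> x y xu yx; apply: le_trans (mT _ _ yx) xu.
- move=> D DB Dd s Hs; have [s' [_ Hs'] ->] := H D Dd s Hs.
  by apply: Hs' => _ [x Dx <-]; apply: DB.
Qed.

Lemma b_a : PB -> Mcp T.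
Proof.
move=> [mT H] D Dd s Hs; exists (T s) => //; split.
  by move=> _ [x Dx <-]; apply: mT; apply: Hs.1.
move=> u Hu; apply: (H D u) => [a Da|]; first by apply: Hu; exists a.
exact: sup_hclos.
Qed.

Lemma a_c : Mcp T -> PC.
Proof.
move=> H; have mT := mcp_mono H; split => // A _ [a Ha <-].
apply: (Ha (fun x => dclos (img T A) (T x))).
- move=> D DB Dd s Hs; have [s' Hs' ->] := H D Dd s Hs.
  apply: (@dclos_closed _ _ (img T A) (img T D)) Hs' => //.
    by move=> _ [x Dx <-]; apply: DB.
  exact: img_directed.
- by move=> y Ay; apply: dclos_incl; exists y.
Qed.

Lemma c_b : PC -> PB.
Proof.
move=> [mT H]; split => // A u Au a Ha.
apply: (Ha (fun x => T x <= u)) => //.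
- by move=> x y xu yx; apply: le_trans (mT _ _ yx) xu.
- move=> D DB Dd s Hs.
  have : dclos (img T D) (T s) by apply: H; exists s => //; exact: sup_dclos.
  move=> Hd; apply: (Hd (fun z => z <= u)); first exact: down_closed.
  by move=> _ [x Dx <-]; apply: DB.
Qed.

Lemma a_d : Mcp T -> PD.
Proof.
move=> H; have mT := mcp_mono H; move=> A _ [a Ha <-].
apply: (Ha (fun x => hclos (img T A) (T x))).
- by move=> x y Hx yx; apply: (@hclos_lower _ _ _ (T x)) => //; apply: mT.
- move=> D DB Dd s Hs; have [s' Hs' ->] := H D Dd s Hs.
  apply: (@hclos_closed _ _ (img T A) (img T D)) Hs' => //.
    by move=> _ [x Dx <-]; apply: DB.
  exact: img_directed.
- by move=> y Ay; apply: hclos_incl; exists y.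
Qed.

Lemma d_b : PD -> PB.
Proof.
move=> H.
have HB : forall (A : X1 -> Prop) (u : X2), (forall a, A a -> T a <= u) ->
     forall a, hclos A a -> T a <= u.
  move=> A u Au a Ha.
  have : hclos (img T A) (T a) by apply: H; exists a.
  move=> Hh; apply: (Hh (fun z => z <= u)); [exact: down_lower | exact: down_closed | by move=> _ [x Ax <-]; apply: Au].
split => // x y xy; apply: (HB (fun z => z = y)) => [_ ->//|].
by move=> B HL _ By; apply: (HL y) => //; apply: By.
Qed.

Lemma a_e : Mcp T -> PE.
Proof.
move=> H; have [mT HC] := a_c H.
have key : forall A t, is_tip A t -> is_tip (img T A) (T t).
  move=> A t [Ht Hmax]; split; first by apply: HC; exists t.
  move=> x Hx; apply: (Hx (fun z => z <= T t)); first exact: down_closed.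
  by move=> _ [a Aa <-]; apply: mT; apply: Hmax; apply: dclos_incl.
move=> A [t Ht]; split; first by exists (T t); apply: key.
by move=> t' Ht'; exists (T t') => //; apply: key.
Qed.

Lemma e_a : PE -> Mcp T.
Proof.
move=> H D Dd s Hs.
have tD : is_tip D s.
  split; first exact: sup_dclos.
  move=> x Hx; apply: (Hx (fun z => z <= s)); first exact: down_closed.
  by move=> y Dy; apply: Hs.1.
have [_ H2] := H D (ex_intro _ s tD).
have [t' [Ht' Hmax] ->] := H2 s tD.
exists t' => //; split.
  by move=> y Hy; apply: Hmax; apply: dclos_incl.
move=> u Hu; apply: (Ht' (fun z => z <= u)); first exact: down_closed.
exact: Hu.
Qed.

End Map.

Theorem mainTheorem2 (d1 d2 : Order.disp_t) (X1 : porderType d1) (X2 : porderType d2)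
    (T : X1 -> X2) :
  [<-> Mcp T;
       monotone T /\
         (forall (A : X1 -> Prop) (u : X2), (forall a, A a -> T a <= u) ->
            forall a, hclos A a -> T a <= u);
       monotone T /\
         (forall A : X1 -> Prop, forall y, img T (dclos A) y -> dclos (img T A) y);
       (forall A : X1 -> Prop, forall y, img T (hclos A) y -> hclos (img T A) y);
       (forall A : X1 -> Prop, has_tip A ->
          has_tip (img T A) /\
          forall t, is_tip A t -> exists2 t', is_tip (img T A) t' & T t = t')].
Proof.
tfae.
- exact: a_b.
- by move=> h; apply: a_c; apply: b_a.
- by move=> h; apply: a_d; apply: b_a; apply: c_b.
- by move=> h; apply: a_e; apply: b_a; apply: d_b.
- exact: e_a.
Qed.
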